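(* There is an absolute constant $C>0$ such that for every instance with capacities $c_i\ge1$ and $c_{\min}=\min_{i\in I}c_i\ge2$, $$\mathrm{OPT}(\mathrm{LP})\Big(1-C\sqrt{\tfrac{\log c_{\min}}{c_{\min}}}\Big)\ \le\ \mathrm{OPT}(\mathrm{PBP})\ \le\ \mathrm{OPT}(\mathrm{LP}).$$ In particular $\mathrm{OPT}(\mathrm{PBP})/\mathrm{OPT}(\mathrm{LP})\to1$ as $c_{\min}\to\infty$.
   Context: Instance: bipartite graph $G=(I,T,E)$, rewards $r_i>0$ and integer capacities $c_i\ge1$ for $i\in I$, arrivals $t\in T$ ordered $1,2,\dots$, edge probabilities $p_{it}\in[0,1]$. Expectation LP: maximize $\sum_{(i,t)\in E}p_{it}r_ix_{it}$ subject to $\sum_tp_{it}x_{it}\le c_i$ for all $i$, $\sum_ix_{it}\le1$ for all $t$, $0\le x_{it}\le1$; its optimum is $\mathrm{OPT}(\mathrm{LP})$. Sample paths: $\omega$ assigns each edge an outcome $\mathbb{1}^\omega(i,t)\in\{0,1\}$, independent Bernoulli($p_{it}$); $\Omega$ is the set of all paths; $\omega_{t}$ is the restriction of $\omega$ to edges incident to arrivals $t'\le t$. PBP: variables $x^\omega_{it}\in[0,1]$; maximize $E_\omega\big[\sum_{(i,t)\in E}r_ix^\omega_{it}\mathbb{1}^\omega(i,t)\big]$ subject to $\sum_tx^\omega_{it}\mathbb{1}^\omega(i,t)\le c_i$ for all $i,\omega$; $\sum_ix^\omega_{it}\le1$ for all $t,\omega$; $x^\omega_{it}=x^{\omega'}_{it}$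 whenever $\omega_{t-1}=\omega'_{t-1}$. Its optimum is $\mathrm{OPT}(\mathrm{PBP})$. *)

(* Defs.v *)
From Stdlib Require Import Reals List Arith Bool.
Import ListNotations.
Open Scope R_scope.

(** An instance: resources I = {0..nI-1}, arrivals T = {0..nT-1} in arrival
    order, edge set given by the predicate E (restricted to I x T), rewards r,
    integer capacities c, edge probabilities p. *)
Record Instance := mkInstance {
  nI : nat;
  nT : nat;
  E  : nat -> nat -> bool;
  rew : nat -> R;
  cap : nat -> nat;
  prob : nat -> nat -> R
}.

Definition valid_instance (G : Instance) : Prop :=
  (1 <= nI G)%nat /\
  (forall i, (i < nI G)%nat -> 0 < rew G i) /\
  (forall i, (i < nI G)%nat -> (1 <= cap G i)%nat) /\
  (forall i t, (i < nI G)%nat -> (t < nT G)%nat -> E G i t = true ->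
     0 <= prob G i t <= 1).

Definition edges (G : Instance) : list (nat * nat) :=
  filter (fun e => E G (fst e) (snd e))
         (list_prod (seq 0 (nI G)) (seq 0 (nT G))).

Definition sumL {A : Type} (f : A -> R) (l : list A) : R :=
  fold_right (fun a acc => f a + acc) 0 l.

Definition prodL {A : Type} (f : A -> R) (l : list A) : R :=
  fold_right (fun a acc => f a * acc) 1 l.

Definition cmin (G : Instance) : nat :=
  match seq 0 (nI G) with
  | [] => 0%nat
  | i0 :: l => fold_left (fun m i => Nat.min m (cap G i)) l (cap G i0)
  end.

Definition LP_feasible (G : Instance) (x : nat -> nat -> R) : Prop :=
  (forall i, (i < nI G)%nat ->
     sumL (fun e => prob G (fst e) (snd e) * x (fst e) (snd e))
          (filter (fun e => Nat.eqb (fst e) i) (edges G)) <= INR (cap G i)) /\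
  (forall t, (t < nT G)%nat ->
     sumL (fun e => x (fst e) (snd e))
          (filter (fun e => Nat.eqb (snd e) t) (edges G)) <= 1) /\
  (forall e, In e (edges G) -> 0 <= x (fst e) (snd e) <= 1).

Definition LP_obj (G : Instance) (x : nat -> nat -> R) : R :=
  sumL (fun e => prob G (fst e) (snd e) * rew G (fst e) * x (fst e) (snd e))
       (edges G).

Definition OPT_LP (G : Instance) (v : R) : Prop :=
  is_lub (fun w => exists x, LP_feasible G x /\ w = LP_obj G x) v.

(** A sample path assigns an outcome to each edge; it is represented as a
    function nat -> nat -> bool equal to false off the edge set. *)
Definition upd (w : nat -> nat -> bool) (e : nat * nat) (b : bool)
  : nat -> nat -> bool :=
  fun i t => if Nat.eqb i (fst e) && Nat.eqb t (snd e) then b else w i t.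

Fixpoint allPaths (l : list (nat * nat)) : list (nat -> nat -> bool) :=
  match l with
  | [] => [fun _ _ => false]
  | e :: l' => flat_map (fun w => [upd w e true; upd w e false]) (allPaths l')
  end.

Definition Omega (G : Instance) : list (nat -> nat -> bool) := allPaths (edges G).

Definition path_prob (G : Instance) (w : nat -> nat -> bool) : R :=
  prodL (fun e => if w (fst e) (snd e) then prob G (fst e) (snd e)
                  else 1 - prob G (fst e) (snd e)) (edges G).

Definition ind (b : bool) : R := if b then 1 else 0.

Definition PBP_feasible (G : Instance)
    (x : (nat -> nat -> bool) -> nat -> nat -> R) : Prop :=
  (forall w, In w (Omega G) -> forall i, (i < nI G)%nat ->
     sumL (fun e => x w (fst e) (snd e) * ind (w (fst e) (snd e)))
          (filter (fun e => Nat.eqb (fst e) i) (edges G)) <= INR (cap G i)) /\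
  (forall w, In w (Omega G) -> forall t, (t < nT G)%nat ->
     sumL (fun e => x w (fst e) (snd e))
          (filter (fun e => Nat.eqb (snd e) t) (edges G)) <= 1) /\
  (forall w, In w (Omega G) -> forall e, In e (edges G) ->
     0 <= x w (fst e) (snd e) <= 1) /\
  (* non-anticipativity: x^w_it depends only on outcomes of edges incident
     to arrivals t' < t (i.e. omega_{t-1}) *)
  (forall w w', In w (Omega G) -> In w' (Omega G) ->
     forall e, In e (edges G) ->
     (forall e', In e' (edges G) -> (snd e' < snd e)%nat ->
        w (fst e') (snd e') = w' (fst e') (snd e')) ->
     x w (fst e) (snd e) = x w' (fst e) (snd e)).

Definition PBP_obj (G : Instance)
    (x : (nat -> nat -> bool) -> nat -> nat -> R) : R :=
  sumL (fun w => path_prob G w *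
          sumL (fun e => rew G (fst e) * x w (fst e) (snd e)
                          * ind (w (fst e) (snd e))) (edges G))
       (Omega G).

Definition OPT_PBP (G : Instance) (v : R) : Prop :=
  is_lub (fun w => exists x, PBP_feasible G x /\ w = PBP_obj G x) v.

(* Main.v *)
Require Import Defs.
From Stdlib Require Import Reals Lra Lia List Arith Bool FunctionalExtensionality Sorting.Sorted Rpower.
Import ListNotations.
Import Defs.
Open Scope R_scope.

Lemma sumL_ext {A} (f g : A -> R) l : (forall a, In a l -> f a = g a) -> sumL f l = sumL g l.
Proof. induction l; simpl; intros H; auto. rewrite H by auto. rewrite IHl; auto. Qed.

Lemma sumL_plus {A} (f g : A -> R) l : sumL (fun a => f a + g a) l = sumL f l + sumL g l.
Proof. induction l; simpl; [lra|]. rewrite IHl; ring. Qed.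

Lemma sumL_scal {A} (f : A -> R) k l : sumL (fun a => k * f a) l = k * sumL f l.
Proof. induction l; simpl; [ring|]. rewrite IHl; ring. Qed.

Lemma sumL_scal_r {A} (f : A -> R) k l : sumL (fun a => f a * k) l = sumL f l * k.
Proof. induction l; simpl; [ring|]. rewrite IHl; ring. Qed.

Lemma sumL_zero {A} (l : list A) : sumL (fun _ => 0) l = 0.
Proof. induction l; simpl; [ring|]. rewrite IHl; ring. Qed.

Lemma sumL_le {A} (f g : A -> R) l : (forall a, In a l -> f a <= g a) -> sumL f l <= sumL g l.
Proof. induction l; simpl; intros H; [lra|].
 assert (f a <= g a) by auto. assert (sumL f l <= sumL g l) by auto. lra. Qed.

Lemma sumL_nonneg {A} (f : A -> R) l : (forall a, In a l -> 0 <= f a) -> 0 <= sumL f l.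
Proof. intros H. rewrite <- (sumL_zero l). apply sumL_le; auto. Qed.

Lemma sumL_app {A} (f : A -> R) l1 l2 : sumL f (l1 ++ l2) = sumL f l1 + sumL f l2.
Proof. induction l1; simpl; [ring|]. rewrite IHl1; ring. Qed.

Lemma sumL_flat_map {A B} (f : B -> R) (g : A -> list B) l :
  sumL f (flat_map g l) = sumL (fun x => sumL f (g x)) l.
Proof. induction l; simpl; auto. rewrite sumL_app, IHl; auto. Qed.

Lemma sumL_exchange {A B} (F : A -> B -> R) la lb :
  sumL (fun a => sumL (fun b => F a b) lb) la = sumL (fun b => sumL (fun a => F a b) la) lb.
Proof. induction la; simpl. - rewrite sumL_zero; auto.
 - rewrite IHla. rewrite <- sumL_plus. auto. Qed.

Lemma sum_delta0 {A} (dec : forall x y : A, {x = y} + {x <> y}) (h : A -> R) k l :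
  ~ In k l -> sumL (fun i => if dec i k then h i else 0) l = 0.
Proof. induction l as [|a l IH]; simpl; intros Hn; auto.
 destruct (dec a k); [subst; tauto|]. rewrite IH by tauto. ring. Qed.

Lemma sum_delta {A} (dec : forall x y : A, {x = y} + {x <> y}) (h : A -> R) k l :
  NoDup l -> In k l -> sumL (fun i => if dec i k then h i else 0) l = h k.
Proof. induction l as [|a l IH]; simpl; intros Hn Hk; [tauto|]. inversion Hn; subst.
 destruct (dec a k).
 - subst. rewrite sum_delta0 by auto. ring.
 - destruct Hk; [congruence|]. rewrite IH by auto. ring.
Qed.

Lemma prodL_ext {A} (f g : A -> R) l : (forall a, In a l -> f a = g a) -> prodL f l = prodL g l.
Proof. induction l; simpl; intros H; auto. rewrite H by auto. rewrite IHl; auto. Qed.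

Lemma prodL_nonneg {A} (f : A -> R) l : (forall a, In a l -> 0 <= f a) -> 0 <= prodL f l.
Proof. induction l; simpl; intros H; [lra|]. apply Rmult_le_pos; auto. Qed.

Definition wt (p : nat -> nat -> R) (L : list (nat*nat)) (w : nat -> nat -> bool) : R :=
  prodL (fun e => if w (fst e) (snd e) then p (fst e) (snd e) else 1 - p (fst e) (snd e)) L.

Definition Ex (p : nat -> nat -> R) (L : list (nat*nat)) (f : (nat -> nat -> bool) -> R) : R :=
  sumL (fun w => wt p L w * f w) (allPaths L).

Definition Good (L : list (nat*nat)) (w : nat -> nat -> bool) : Prop :=
  forall i t, w i t = true -> In (i,t) L.

Lemma upd_neq w e b e' : e' <> e -> upd w e b (fst e') (snd e') = w (fst e') (snd e').
Proof. intros H. destruct e as [a c], e' as [a' c']; unfold upd; simpl.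
 destruct (Nat.eqb_spec a' a), (Nat.eqb_spec c' c); simpl; auto. subst; congruence. Qed.

Lemma upd_eq w e b : upd w e b (fst e) (snd e) = b.
Proof. unfold upd. rewrite !Nat.eqb_refl. auto. Qed.

Lemma upd_comm w e e0 b b0 : e <> e0 -> upd (upd w e b) e0 b0 = upd (upd w e0 b0) e b.
Proof. intros H. extensionality i. extensionality t. unfold upd.
 destruct e as [a c], e0 as [a0 c0]; simpl.
 destruct (Nat.eqb_spec i a0), (Nat.eqb_spec t c0), (Nat.eqb_spec i a), (Nat.eqb_spec t c);
 simpl; auto; subst; congruence. Qed.

Lemma allPaths_good L w : In w (allPaths L) -> Good L w.
Proof. revert w; induction L as [|e l IH]; simpl; intros w Hw.
 - destruct Hw as [<-|[]]. intros i t H; discriminate.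
 - apply in_flat_map in Hw as [w0 [Hw0 Hw]]. intros i t H.
   assert (Hu: forall b, upd w0 e b i t = true -> e = (i,t) \/ In (i,t) l).
   { intros b. unfold upd. destruct e as [a c]; simpl.
     destruct (Nat.eqb_spec i a), (Nat.eqb_spec t c); simpl; intros Hb; subst; auto;
     right; apply (IH w0 Hw0); auto. }
   simpl in Hw. destruct Hw as [<-|[<-|[]]]; apply (Hu _ H).
Qed.

Lemma good_allPaths L w : Good L w -> In w (allPaths L).
Proof. revert w; induction L as [|e l IH]; simpl; intros w Hw.
 - left. extensionality i. extensionality t. destruct (w i t) eqn:E; auto.
   apply Hw in E. destruct E.
 - apply in_flat_map. exists (upd w e false). split.
   + apply IH. intros i t H. unfold upd in H. destruct e as [a c]; simpl in H.
     destruct (Nat.eqb_spec i a), (Nat.eqb_spec t c); simpl in H; try discriminate;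
     (destruct (Hw i t H) as [Heq|]; [inversion Heq; subst; congruence|auto]).
   + assert (Hx: forall b, w (fst e) (snd e) = b -> w = upd (upd w e false) e b).
     { intros b Hb. extensionality i. extensionality t. unfold upd. destruct e as [a c]; simpl in *.
       destruct (Nat.eqb_spec i a), (Nat.eqb_spec t c); simpl; subst; auto. }
     simpl. destruct (w (fst e) (snd e)) eqn:E; [left|right;left]; symmetry; apply Hx; auto.
Qed.

Lemma upd_good L w e b : In e L -> Good L w -> Good L (upd w e b).
Proof. intros He Hw i t. unfold upd. destruct e as [a c]; simpl.
 destruct (Nat.eqb_spec i a), (Nat.eqb_spec t c); simpl; intros H; subst; auto. Qed.

Lemma Good_cons L w e : Good L w -> Good (e :: L) w.
Proof. intros H i t Ht. right; auto. Qed.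

Lemma Ex_ext p L f g : (forall w, f w = g w) -> Ex p L f = Ex p L g.
Proof. intros H; unfold Ex; apply sumL_ext; intros; rewrite H; auto. Qed.

Lemma Ex_ext_in p L f g : (forall w, In w (allPaths L) -> f w = g w) -> Ex p L f = Ex p L g.
Proof. intros H; unfold Ex; apply sumL_ext; intros; rewrite H; auto. Qed.

Lemma Ex_plus p L f g : Ex p L (fun w => f w + g w) = Ex p L f + Ex p L g.
Proof. unfold Ex. rewrite <- sumL_plus. apply sumL_ext; intros; ring. Qed.

Lemma Ex_scal p L f k : Ex p L (fun w => k * f w) = k * Ex p L f.
Proof. unfold Ex. rewrite <- sumL_scal. apply sumL_ext; intros; ring. Qed.

Lemma Ex_sum {A} p L (F : A -> (nat -> nat -> bool) -> R) J :
  Ex p L (fun w => sumL (fun j => F j w) J) = sumL (fun j => Ex p L (F j)) J.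
Proof. unfold Ex. rewrite <- sumL_exchange. apply sumL_ext; intros w _.
 rewrite <- sumL_scal. auto. Qed.

Lemma Ex_mono p L f g : (forall e, In e L -> 0 <= p (fst e) (snd e) <= 1) ->
  (forall w, In w (allPaths L) -> f w <= g w) -> Ex p L f <= Ex p L g.
Proof. intros Hp H. unfold Ex. apply sumL_le. intros w Hw.
 apply Rmult_le_compat_l; auto. unfold wt. apply prodL_nonneg. intros e He.
 destruct (w (fst e) (snd e)); specialize (Hp e He); lra. Qed.

Lemma Ex_cons p e l f : ~ In e l ->
  Ex p (e :: l) f = Ex p l (fun w => p (fst e) (snd e) * f (upd w e true)
                                 + (1 - p (fst e) (snd e)) * f (upd w e false)).
Proof. intros Hn. unfold Ex. simpl allPaths. rewrite sumL_flat_map.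
 apply sumL_ext. intros w Hw. simpl. unfold wt; simpl. rewrite !upd_eq.
 assert (Hb: forall b, prodL (fun e0 => if upd w e b (fst e0) (snd e0) then p (fst e0) (snd e0)
     else 1 - p (fst e0) (snd e0)) l = prodL (fun e0 => if w (fst e0) (snd e0) then p (fst e0) (snd e0)
     else 1 - p (fst e0) (snd e0)) l).
 { intros b. apply prodL_ext. intros a Ha. rewrite upd_neq; auto. intros ->; auto. }
 rewrite !Hb. ring. Qed.

Lemma Ex_const p L k : NoDup L -> Ex p L (fun _ => k) = k.
Proof. induction L as [|e l IH]; intros Hn.
 - unfold Ex, wt; simpl. ring.
 - inversion Hn; subst. rewrite Ex_cons by auto. transitivity (Ex p l (fun _ => k)); [apply Ex_ext; intros; ring|apply IH; auto]. Qed.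

Lemma Ex_indep p L e g : NoDup L -> In e L ->
  (forall w, Good L w -> g (upd w e true) = g (upd w e false)) ->
  Ex p L (fun w => g w * ind (w (fst e) (snd e))) = p (fst e) (snd e) * Ex p L g.
Proof. revert g; induction L as [|e0 l IH]; intros g Hn He Hg; [destruct He|].
 inversion Hn; subst. rewrite !Ex_cons by auto.
 destruct (list_eq_dec (fun x y : nat*nat => ltac:(decide equality; apply Nat.eq_dec)) [e] [e0]) as [Heq|Hne].
 - inversion Heq; subst.
   rewrite <- Ex_scal. apply Ex_ext_in. intros w Hw. rewrite !upd_eq. simpl.
   rewrite (Hg w). ring. apply Good_cons. apply allPaths_good; auto.
 - assert (Hne': e <> e0) by congruence. destruct He as [He|He]; [congruence|].
   set (h := fun w => p (fst e0) (snd e0) * g (upd w e0 true) + (1 - p (fst e0) (snd e0)) * g (upd w e0 false)).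
   transitivity (Ex p l (fun w => h w * ind (w (fst e) (snd e)))).
   { apply Ex_ext. intros w. unfold h. rewrite !upd_neq by auto. ring. }
   apply IH; auto. intros w Hw. unfold h.
   rewrite !(upd_comm w e e0) by auto.
   rewrite !Hg; auto; (apply upd_good; [now left | now apply Good_cons]).
Qed.

Definition pdec (x y : nat * nat) : {x = y} + {x <> y}.
Proof. decide equality; apply Nat.eq_dec. Defined.

Lemma Ex_ind p L e : NoDup L -> In e L -> Ex p L (fun w => ind (w (fst e) (snd e))) = p (fst e) (snd e).
Proof. intros Hn He.
 transitivity (Ex p L (fun w => (fun _ => 1) w * ind (w (fst e) (snd e)))).
 { apply Ex_ext; intros; simpl; ring. }
 rewrite Ex_indep; auto. rewrite Ex_const; auto; ring. Qed.

Lemma Ex_indind p L e e' : NoDup L -> In e L -> In e' L ->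
  Ex p L (fun w => ind (w (fst e') (snd e')) * ind (w (fst e) (snd e))) =
  p (fst e) (snd e) * p (fst e') (snd e') + (if pdec e' e then p (fst e) (snd e) - p (fst e) (snd e) * p (fst e) (snd e) else 0).
Proof. intros Hn He He'. destruct (pdec e' e).
 - subst. transitivity (Ex p L (fun w => ind (w (fst e) (snd e)))).
   { apply Ex_ext; intros w; destruct (w (fst e) (snd e)); simpl; ring. }
   rewrite Ex_ind; auto; ring.
 - rewrite Ex_indep; auto. rewrite Ex_ind; auto; ring.
   intros w _. rewrite !upd_neq; auto.
Qed.

Section Var.
Variable p : nat -> nat -> R.
Variable L K : list (nat * nat).
Variable a : nat * nat -> R.
Hypothesis HnL : NoDup L.
Hypothesis HnK : NoDup K.
Hypothesis HKL : incl K L.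

Definition Sm (w : nat -> nat -> bool) := sumL (fun e => a e * ind (w (fst e) (snd e))) K.
Definition mu := sumL (fun e => a e * p (fst e) (snd e)) K.
Definition Vr := sumL (fun e => a e * a e * (p (fst e) (snd e) - p (fst e) (snd e) * p (fst e) (snd e))) K.

Lemma Ex_Sm : Ex p L Sm = mu.
Proof. unfold Sm, mu. rewrite Ex_sum. apply sumL_ext. intros e He.
 rewrite Ex_scal, Ex_ind; auto. Qed.

Lemma Ex_SmSm : Ex p L (fun w => Sm w * Sm w) = mu * mu + Vr.
Proof.
 transitivity (Ex p L (fun w => sumL (fun e => sumL (fun e' => (a e * a e') *
     (ind (w (fst e') (snd e')) * ind (w (fst e) (snd e)))) K) K)).
 { apply Ex_ext. intros w. unfold Sm at 1. rewrite <- sumL_scal_r. apply sumL_ext.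
   intros e _. unfold Sm. rewrite <- sumL_scal. apply sumL_ext. intros; ring. }
 rewrite Ex_sum.
 transitivity (sumL (fun e => a e * p (fst e) (snd e) * mu + a e * a e *
     (p (fst e) (snd e) - p (fst e) (snd e) * p (fst e) (snd e))) K).
 { apply sumL_ext. intros e He. rewrite Ex_sum.
   transitivity (sumL (fun e' => a e * p (fst e) (snd e) * (a e' * p (fst e') (snd e')) +
      (if pdec e' e then (fun e'' => a e * a e'' * (p (fst e) (snd e) - p (fst e) (snd e) * p (fst e) (snd e))) e' else 0)) K).
   { apply sumL_ext. intros e' He'. rewrite Ex_scal, Ex_indind; auto.
     destruct (pdec e' e); ring. }
   rewrite sumL_plus, sumL_scal, sum_delta; auto. }
 rewrite sumL_plus, sumL_scal_r. unfold Vr, mu. ring.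
Qed.

Hypothesis Hp : forall e, In e L -> 0 <= p (fst e) (snd e) <= 1.
Hypothesis Ha : forall e, In e K -> 0 <= a e <= 1.

Lemma mu_nonneg : 0 <= mu.
Proof. apply sumL_nonneg. intros e He. specialize (Hp e (HKL e He)). specialize (Ha e He).
 apply Rmult_le_pos; lra. Qed.

Lemma Vr_le : 0 <= Vr <= mu.
Proof. split.
 - apply sumL_nonneg. intros e He. specialize (Hp e (HKL e He)). specialize (Ha e He).
   apply Rmult_le_pos; [nra|]. nra.
 - apply sumL_le. intros e He. specialize (Hp e (HKL e He)). specialize (Ha e He).
   set (q := p (fst e) (snd e)) in *. set (x := a e) in *.
   assert (0 <= q - q * q) by nra. assert (x * x <= x) by nra.
   assert (x * x * (q - q*q) <= x * (q - q*q)) by (apply Rmult_le_compat_r; lra).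
   assert (0 <= x * (q * q)) by (apply Rmult_le_pos; nra).
   nra.
Qed.

Lemma min_bound (S c m : R) : m < c -> S - (S - m) * (S - m) / (4 * (c - m)) <= Rmin S c.
Proof. intros H. set (X := (S - m) * (S - m) / (4 * (c - m))).
 assert (HX: X * (4 * (c - m)) = (S - m) * (S - m)) by (unfold X; field; lra).
 assert (H1: (S - m) * (S - m) - 4 * (c - m) * (S - c) = (S - m - 2 * (c - m)) * (S - m - 2 * (c - m))) by ring.
 assert (H2: 0 <= (S - m - 2 * (c - m)) * (S - m - 2 * (c - m))) by apply Rle_0_sqr.
 assert (H3: 0 <= (S - m) * (S - m)) by apply Rle_0_sqr.
 assert (X >= 0). { destruct (Rlt_or_le X 0); [|lra]. nra. }
 assert (X >= S - c). { destruct (Rlt_or_le X (S - c)); [|lra]. nra. }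
 unfold Rmin; destruct (Rle_dec S c); lra. Qed.

Lemma res_bound c d : 0 < d -> d <= c - mu -> mu - mu / (4 * d) <= Ex p L (fun w => Rmin (Sm w) c).
Proof. intros Hd Hdc. pose proof mu_nonneg. pose proof Vr_le.
 set (d' := c - mu).
 assert (Hmono: Ex p L (fun w => Sm w - (Sm w - mu) * (Sm w - mu) / (4 * d')) <= Ex p L (fun w => Rmin (Sm w) c)).
 { apply Ex_mono; auto. intros w _. apply min_bound. unfold d' in *; lra. }
 assert (HE: Ex p L (fun w => Sm w - (Sm w - mu) * (Sm w - mu) / (4 * d')) = mu - Vr / (4 * d')).
 { transitivity (Ex p L (fun w => (1 + 2 * mu / (4 * d')) * Sm w + ((- / (4 * d')) * (Sm w * Sm w) + (fun _ => - (mu * mu) / (4 * d')) w))).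
   { apply Ex_ext; intros w. field. unfold d'; lra. }
   rewrite Ex_plus, Ex_scal, Ex_plus, Ex_scal, Ex_const, Ex_Sm, Ex_SmSm; auto. field. unfold d'; lra. }
 rewrite HE in Hmono.
 assert (Vr / (4 * d') <= mu / (4 * d)).
 { unfold Rdiv. apply Rmult_le_compat; try lra.
   - apply Rlt_le, Rinv_0_lt_compat. unfold d'; lra.
   - apply Rinv_le_contravar; unfold d'; lra. }
 lra.
Qed.
End Var.

Definition LI (G : Instance) (i : nat) := filter (fun e => Nat.eqb (fst e) i) (edges G).

Lemma NoDup_map_pair (x : nat) (l : list nat) : NoDup l -> NoDup (map (fun y => (x, y)) l).
Proof. induction 1; simpl; constructor; auto. intros Hin. apply in_map_iff in Hin as [y [Hy Hy']].
 inversion Hy; subst; auto. Qed.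

Lemma NoDup_prod (l l' : list nat) : NoDup l -> NoDup l' -> NoDup (list_prod l l').
Proof. induction 1; intros Hl'; simpl; [constructor|]. apply NoDup_app; auto.
 - apply NoDup_map_pair; auto.
 - intros a Ha Hb. apply in_map_iff in Ha as [y [<- _]]. apply in_prod_iff in Hb as [Hb _]. auto. Qed.

Lemma edges_NoDup G : NoDup (edges G).
Proof. unfold edges. apply NoDup_filter, NoDup_prod; apply seq_NoDup. Qed.

Lemma In_edges G e : In e (edges G) -> (fst e < nI G)%nat /\ (snd e < nT G)%nat /\ E G (fst e) (snd e) = true.
Proof. unfold edges. intros H. apply filter_In in H as [H1 H2]. destruct e as [i t].
 apply in_prod_iff in H1 as [Hi Ht]. apply in_seq in Hi, Ht. simpl. repeat split; auto; lia. Qed.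

Lemma LI_incl G i : incl (LI G i) (edges G).
Proof. intros e He. unfold LI in He. apply filter_In in He; tauto. Qed.

Lemma LI_fst G i e : In e (LI G i) -> fst e = i.
Proof. unfold LI; intros He. apply filter_In in He as [_ H]. apply Nat.eqb_eq; auto. Qed.

Lemma LI_NoDup G i : NoDup (LI G i).
Proof. apply NoDup_filter, edges_NoDup. Qed.

Lemma filter_comm {A} (f g : A -> bool) l : filter f (filter g l) = filter g (filter f l).
Proof. induction l; simpl; auto. destruct (f a) eqn:Ef, (g a) eqn:Eg; simpl; rewrite ?Ef, ?Eg, IHl; auto. Qed.

Lemma filter_fst_map i s (B : list nat) :
  filter (fun e : nat * nat => Nat.eqb (fst e) i) (map (fun y => (s, y)) B) = if Nat.eqb s i then map (fun y => (s, y)) B else [].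
Proof. induction B; simpl. - destruct (Nat.eqb s i); auto.
 - rewrite IHB. destruct (Nat.eqb s i); auto. Qed.

Lemma filter_fst_prod i k s (B : list nat) :
  filter (fun e : nat * nat => Nat.eqb (fst e) i) (list_prod (seq s k) B) =
  if (Nat.leb s i && Nat.ltb i (s + k))%bool then map (fun y => (i, y)) B else [].
Proof. revert s; induction k; intros s; simpl.
 - destruct (Nat.leb_spec s i), (Nat.ltb_spec i (s + 0)); simpl; auto; lia.
 - rewrite filter_app, filter_fst_map, IHk.
   destruct (Nat.eqb_spec s i).
   + subst. rewrite Nat.leb_refl. replace (Nat.leb (S i) i) with false by (symmetry; apply Nat.leb_gt; lia).
     replace (Nat.ltb i (i + S k)) with true by (symmetry; apply Nat.ltb_lt; lia). simpl. apply app_nil_r.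
   + rewrite app_nil_l. replace (S s + k)%nat with (s + S k)%nat by lia. destruct (Nat.leb_spec s i), (Nat.leb_spec (S s) i), (Nat.ltb_spec i (s + S k)); simpl; auto; lia.
Qed.

Definition sndlt (u v : nat * nat) : Prop := (snd u < snd v)%nat.

Lemma SS_filter {A} (R0 : A -> A -> Prop) f l : StronglySorted R0 l -> StronglySorted R0 (filter f l).
Proof. induction 1; simpl; [constructor|]. destruct (f a); auto. constructor; auto.
 rewrite Forall_forall in *. intros x Hx. apply filter_In in Hx. apply H0; tauto. Qed.

Lemma SS_map_seq i s n : StronglySorted sndlt (map (fun y => (i, y)) (seq s n)).
Proof. revert s; induction n; intros s; simpl; constructor; auto.
 rewrite Forall_forall. intros x Hx. apply in_map_iff in Hx as [y [<- Hy]]. apply in_seq in Hy.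
 unfold sndlt; simpl; lia. Qed.

Lemma LI_sorted G i : StronglySorted sndlt (LI G i).
Proof. unfold LI, edges. rewrite filter_comm, filter_fst_prod. apply SS_filter.
 destruct (_ && _)%bool; [apply SS_map_seq|constructor]. Qed.

Lemma sum_delta_nat (v : R) k n : (k < n)%nat ->
  sumL (fun i => if Nat.eqb k i then v else 0) (seq 0 n) = v.
Proof. intros Hk.
 transitivity (sumL (fun i => if Nat.eq_dec i k then (fun _ => v) i else 0) (seq 0 n)).
 { apply sumL_ext. intros i _. destruct (Nat.eqb_spec k i), (Nat.eq_dec i k); subst; congruence. }
 apply sum_delta. apply seq_NoDup. apply in_seq; lia. Qed.

Lemma split_gen (f : nat * nat -> R) n l : (forall e, In e l -> (fst e < n)%nat) ->
  sumL f l = sumL (fun i => sumL f (filter (fun e => Nat.eqb (fst e) i) l)) (seq 0 n).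
Proof. induction l as [|a l IH]; simpl; intros H.
 - rewrite sumL_zero; auto.
 - transitivity (sumL (fun i => (if Nat.eqb (fst a) i then f a else 0) + sumL f (filter (fun e => Nat.eqb (fst e) i) l)) (seq 0 n)).
   + rewrite sumL_plus, sum_delta_nat, IH; auto.
   + apply sumL_ext. intros i _. destruct (Nat.eqb (fst a) i); simpl; ring.
Qed.

Lemma split_res G (f : nat * nat -> R) :
  sumL f (edges G) = sumL (fun i => sumL f (LI G i)) (seq 0 (nI G)).
Proof. apply split_gen. intros e He. apply In_edges in He; tauto. Qed.

Lemma filter_nil {A} (f : A -> bool) l : (forall x, In x l -> f x = false) -> filter f l = [].
Proof. induction l; simpl; intros H; auto. rewrite H by auto. apply IHl; auto. Qed.

Section Tele.
Variable a : nat * nat -> R.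
Variable w : nat -> nat -> bool.
Variable c : R.
Definition Pl (l : list (nat*nat)) (e : nat*nat) :=
  sumL (fun e' => a e' * ind (w (fst e') (snd e'))) (filter (fun e' => Nat.ltb (snd e') (snd e)) l).

Lemma tele l : StronglySorted sndlt l -> forall s,
  sumL (fun e => (Rmin (s + Pl l e + a e) c - Rmin (s + Pl l e) c) * ind (w (fst e) (snd e))) l =
  Rmin (s + sumL (fun e => a e * ind (w (fst e) (snd e))) l) c - Rmin s c.
Proof. induction 1 as [|e0 l Hs IH Hf]; intros s; simpl.
 - rewrite Rplus_0_r. ring.
 - rewrite Forall_forall in Hf.
   assert (H0: Pl (e0 :: l) e0 = 0).
   { unfold Pl. simpl. rewrite Nat.ltb_irrefl. rewrite filter_nil; auto.
     intros x Hx. apply Nat.ltb_ge. specialize (Hf x Hx). unfold sndlt in Hf. lia. }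
   rewrite H0.
   transitivity ((Rmin (s + 0 + a e0) c - Rmin (s + 0) c) * ind (w (fst e0) (snd e0)) +
     sumL (fun e => (Rmin ((s + a e0 * ind (w (fst e0) (snd e0))) + Pl l e + a e) c -
        Rmin ((s + a e0 * ind (w (fst e0) (snd e0))) + Pl l e) c) * ind (w (fst e) (snd e))) l).
   { f_equal. apply sumL_ext. intros e He.
     assert (Hp: Pl (e0 :: l) e = a e0 * ind (w (fst e0) (snd e0)) + Pl l e).
     { unfold Pl. simpl. replace (Nat.ltb (snd e0) (snd e)) with true. reflexivity.
       symmetry. apply Nat.ltb_lt. apply Hf; auto. }
     rewrite Hp. rewrite !Rplus_assoc. reflexivity. }
   rewrite IH. rewrite !Rplus_0_r.
   destruct (w (fst e0) (snd e0)); simpl; rewrite ?Rmult_1_r, ?Rmult_0_r, ?Rplus_0_r, ?Rplus_0_l, ?Rplus_assoc; ring.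
Qed.
End Tele.

Lemma cmin_fold (cp : nat -> nat) l m0 :
  (fold_left (fun m i => Nat.min m (cp i)) l m0 <= m0)%nat /\
  forall i, In i l -> (fold_left (fun m i => Nat.min m (cp i)) l m0 <= cp i)%nat.
Proof. revert m0; induction l as [|a l IHl]; simpl; intros m0.
 - split; [lia|tauto].
 - destruct (IHl (Nat.min m0 (cp a))) as [H1 H2]. split; [lia|].
   intros i [<-|Hi]; [lia|auto]. Qed.

Lemma cmin_le G i : (i < nI G)%nat -> (cmin G <= cap G i)%nat.
Proof. intros Hi. unfold cmin. assert (Hin: In i (seq 0 (nI G))) by (apply in_seq; lia).
 destruct (seq 0 (nI G)) as [|i0 l]; [destruct Hin|].
 destruct (cmin_fold (cap G) l (cap G i0)) as [H1 H2]. destruct Hin as [<-|Hin]; auto. Qed.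

Lemma prob_bounds G : valid_instance G -> forall e, In e (edges G) -> 0 <= prob G (fst e) (snd e) <= 1.
Proof. intros [_ [_ [_ Hv]]] e He. apply In_edges in He as [H1 [H2 H3]]. apply Hv; auto. Qed.

Lemma upper G : valid_instance G -> forall x, PBP_feasible G x ->
  exists y, LP_feasible G y /\ LP_obj G y = PBP_obj G x.
Proof. intros Hv x [Hc [Ha [Hb Hna]]].
 pose proof (prob_bounds G Hv) as Hp. pose proof (edges_NoDup G) as Hn.
 set (y := fun i t => Ex (prob G) (edges G) (fun w => x w i t)). exists y.
 assert (Key: forall e, In e (edges G) ->
   Ex (prob G) (edges G) (fun w => x w (fst e) (snd e) * ind (w (fst e) (snd e))) = prob G (fst e) (snd e) * y (fst e) (snd e)).
 { intros e He. unfold y. apply (Ex_indep _ _ _ (fun w => x w (fst e) (snd e))); auto.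
   intros w Hw. apply Hna; [apply good_allPaths, upd_good; auto | apply good_allPaths, upd_good; auto | auto |].
   intros e' He' Hlt. rewrite !upd_neq; auto; intros ->; lia. }
 split; [unfold LP_feasible; split; [|split]|].
 - intros i Hi.
   transitivity (Ex (prob G) (edges G) (fun w => sumL (fun e => x w (fst e) (snd e) * ind (w (fst e) (snd e))) (filter (fun e => Nat.eqb (fst e) i) (edges G)))).
   + rewrite (Ex_sum _ _ (fun e w => x w (fst e) (snd e) * ind (w (fst e) (snd e)))).
     right. apply sumL_ext. intros e He. apply filter_In in He. rewrite Key; tauto.
   + rewrite <- (Ex_const (prob G) (edges G) (INR (cap G i))) by auto.
     apply Ex_mono; auto.
 - intros t Ht.
   transitivity (Ex (prob G) (edges G) (fun w => sumL (fun e => x w (fst e) (snd e)) (filter (fun e => Nat.eqb (snd e) t) (edges G)))).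
   + rewrite (Ex_sum _ _ (fun e w => x w (fst e) (snd e))). right. reflexivity.
   + rewrite <- (Ex_const (prob G) (edges G) 1) by auto. apply Ex_mono; auto.
 - intros e He. unfold y. split.
   + rewrite <- (Ex_const (prob G) (edges G) 0) by auto. apply Ex_mono; auto.
     intros w Hw. apply (Hb w Hw e He).
   + rewrite <- (Ex_const (prob G) (edges G) 1) by auto. apply Ex_mono; auto.
     intros w Hw. apply (Hb w Hw e He).
 - unfold PBP_obj, LP_obj. change (sumL (fun w => path_prob G w * ?F w) (Omega G)) with (Ex (prob G) (edges G) F).
   transitivity (Ex (prob G) (edges G) (fun w => sumL (fun e => rew G (fst e) * (x w (fst e) (snd e) * ind (w (fst e) (snd e)))) (edges G))).
   + rewrite (Ex_sum _ _ (fun e w => rew G (fst e) * (x w (fst e) (snd e) * ind (w (fst e) (snd e))))).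
     apply sumL_ext. intros e He. rewrite Ex_scal, Key by auto. ring.
   + apply Ex_ext. intros w. apply sumL_ext. intros; ring.
Qed.

Lemma rmin_diff P a c : 0 <= a -> 0 <= Rmin (P + a) c - Rmin P c <= a.
Proof. intros Ha. unfold Rmin. destruct (Rle_dec (P + a) c), (Rle_dec P c); lra. Qed.

Section Lower.
Variable G : Instance.
Hypothesis Hv : valid_instance G.
Variable iq : R.
Hypothesis Hiq : 0 < iq < 1.
Variable y : nat -> nat -> R.
Hypothesis Hy : LP_feasible G y.

Definition aa (e : nat * nat) := (1 - iq) * y (fst e) (snd e).
Definition XX (w : nat -> nat -> bool) (i t : nat) :=
  Rmin (Pl aa w (LI G i) (i, t) + aa (i, t)) (INR (cap G i)) - Rmin (Pl aa w (LI G i) (i, t)) (INR (cap G i)).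

Lemma aa_bounds e : In e (edges G) -> 0 <= aa e <= y (fst e) (snd e) /\ y (fst e) (snd e) <= 1.
Proof. intros He. destruct Hy as [_ [_ Hb]]. specialize (Hb e He). unfold aa. split; [split|]; nra. Qed.

Lemma XX_bounds w e : In e (edges G) -> 0 <= XX w (fst e) (snd e) <= aa e.
Proof. intros He. destruct (aa_bounds e He) as [[H1 H2] _]. unfold XX.
 destruct e as [i t]; simpl. apply rmin_diff; auto. Qed.

Lemma cap_id w i : sumL (fun e => XX w (fst e) (snd e) * ind (w (fst e) (snd e))) (LI G i) =
  Rmin (Sm (LI G i) aa w) (INR (cap G i)).
Proof.
 transitivity (sumL (fun e => (Rmin (0 + Pl aa w (LI G i) e + aa e) (INR (cap G i)) - Rmin (0 + Pl aa w (LI G i) e) (INR (cap G i))) * ind (w (fst e) (snd e))) (LI G i)).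
 { apply sumL_ext. intros e He. pose proof (LI_fst G i e He) as Hf. destruct e as [i' t]. simpl in Hf; subst.
   unfold XX; simpl. rewrite !Rplus_0_l. reflexivity. }
 rewrite tele by apply LI_sorted. rewrite Rplus_0_l. unfold Sm.
 rewrite (Rmin_left 0) by apply pos_INR. ring. Qed.

Lemma XX_feasible : PBP_feasible G XX.
Proof. split; [|split; [|split]].
 - intros w _ i Hi. change (filter (fun e => Nat.eqb (fst e) i) (edges G)) with (LI G i).
   rewrite cap_id. apply Rmin_r.
 - intros w _ t Ht. destruct Hy as [_ [Ha _]]. eapply Rle_trans; [|apply (Ha t Ht)].
   apply sumL_le. intros e He. apply filter_In in He as [He _].
   destruct (XX_bounds w e He). destruct (aa_bounds e He) as [[? ?] ?]. lra.
 - intros w _ e He. destruct (XX_bounds w e He). destruct (aa_bounds e He) as [[? ?] ?]. lra.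
 - intros w w' _ _ e He Hag. unfold XX.
   assert (HP: Pl aa w (LI G (fst e)) (fst e, snd e) = Pl aa w' (LI G (fst e)) (fst e, snd e)).
   { unfold Pl. apply sumL_ext. intros e' He'. apply filter_In in He' as [He' Hlt].
     simpl in Hlt. apply Nat.ltb_lt in Hlt. rewrite (Hag e'); auto. apply (LI_incl G (fst e)); auto. }
   rewrite HP. reflexivity.
Qed.
End Lower.

Lemma obj_bound G (Hv : valid_instance G) iq (Hiq : 0 < iq < 1) y (Hy : LP_feasible G y) q
  (Hq : q * iq = 1) (Hq0 : 0 < q) (Hcap : forall i, (i < nI G)%nat -> q * q <= INR (cap G i)) :
  (1 - iq / 4) * (1 - iq) * LP_obj G y <= PBP_obj G (XX G iq y).
Proof.
 pose proof (prob_bounds G Hv) as Hp. pose proof (edges_NoDup G) as Hn.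
 set (T := fun i => sumL (fun e => prob G (fst e) (snd e) * y (fst e) (snd e)) (LI G i)).
 assert (Hmu: forall i, mu (prob G) (LI G i) (aa iq y) = (1 - iq) * T i).
 { intros i. unfold mu, T. rewrite <- sumL_scal. apply sumL_ext. intros; unfold aa; ring. }
 assert (HLP: LP_obj G y = sumL (fun i => rew G i * T i) (seq 0 (nI G))).
 { unfold LP_obj. rewrite split_res. apply sumL_ext. intros i _. unfold T. rewrite <- sumL_scal.
   apply sumL_ext. intros e He. rewrite (LI_fst G i e He). ring. }
 assert (HPB: PBP_obj G (XX G iq y) = sumL (fun i => rew G i * Ex (prob G) (edges G) (fun w => Rmin (Sm (LI G i) (aa iq y) w) (INR (cap G i)))) (seq 0 (nI G))).
 { transitivity (Ex (prob G) (edges G) (fun w => sumL (fun i => rew G i * Rmin (Sm (LI G i) (aa iq y) w) (INR (cap G i))) (seq 0 (nI G)))).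
   - apply (Ex_ext (prob G) (edges G)). intros w. rewrite split_res. apply sumL_ext. intros i _.
     rewrite <- cap_id, <- sumL_scal. apply sumL_ext. intros e He. rewrite (LI_fst G i e He). ring.
   - rewrite (Ex_sum _ _ (fun i w => rew G i * Rmin (Sm (LI G i) (aa iq y) w) (INR (cap G i)))).
     apply sumL_ext. intros i _. apply Ex_scal. }
 rewrite HLP, HPB, <- sumL_scal. apply sumL_le. intros i Hi. apply in_seq in Hi.
 destruct Hv as [_ [Hr [_ _]]]. specialize (Hr i ltac:(lia)).
 assert (HT: T i <= INR (cap G i)). { destruct Hy as [Hc _]. apply Hc; lia. }
 pose proof (Hcap i ltac:(lia)) as Hci.
 assert (Hd: q <= INR (cap G i) - mu (prob G) (LI G i) (aa iq y)).
 { rewrite Hmu. assert ((1 - iq) * T i <= (1 - iq) * INR (cap G i)) by (apply Rmult_le_compat_l; lra).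
   assert (iq * (q * q) <= iq * INR (cap G i)) by (apply Rmult_le_compat_l; lra).
   assert (iq * (q * q) = q) by (rewrite <- Rmult_assoc, (Rmult_comm iq q), Hq; ring). lra. }
 pose proof (res_bound (prob G) (edges G) (LI G i) (aa iq y) Hn (LI_NoDup G i) (LI_incl G i) Hp) as Hrb.
 assert (Ha: forall e, In e (LI G i) -> 0 <= aa iq y e <= 1).
 { intros e He. destruct (aa_bounds G iq Hiq y Hy e (LI_incl G i e He)). lra. }
 specialize (Hrb Ha (INR (cap G i)) q Hq0 Hd).
 rewrite Hmu in Hrb.
 assert (Heq: (1 - iq) * T i - (1 - iq) * T i / (4 * q) = (1 - iq / 4) * (1 - iq) * T i).
 { assert (iq = / q) by (apply Rmult_eq_reg_l with q; [rewrite Hq, Rinv_r|]; lra). subst iq. field. lra. }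
 rewrite Heq in Hrb.
 replace ((1 - iq / 4) * (1 - iq) * (rew G i * T i)) with (rew G i * ((1 - iq / 4) * (1 - iq) * T i)) by ring.
 apply Rmult_le_compat_l; lra.
Qed.

Lemma LP_zero G : LP_feasible G (fun _ _ => 0) /\ LP_obj G (fun _ _ => 0) = 0.
Proof. split; [split; [|split]|].
 - intros i _. rewrite (sumL_ext _ (fun _ => 0)) by (intros; ring). rewrite sumL_zero. apply pos_INR.
 - intros t _. rewrite sumL_zero. lra.
 - intros; lra.
 - unfold LP_obj. rewrite (sumL_ext _ (fun _ => 0)) by (intros; ring). apply sumL_zero.
Qed.

Theorem theorem3 :
  exists C : R, 0 < C /\
  forall (G : Instance), valid_instance G -> (2 <= cmin G)%nat ->
  forall vLP vPBP : R, OPT_LP G vLP -> OPT_PBP G vPBP ->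
    vLP * (1 - C * sqrt (ln (INR (cmin G)) / INR (cmin G))) <= vPBP /\
    vPBP <= vLP.
Proof.
 exists 2. split; [lra|]. intros G Hv Hc vLP vPBP HLP HPBP.
 assert (Hup: vPBP <= vLP).
 { apply (proj2 HPBP). intros v [x [Hx ->]]. destruct (upper G Hv x Hx) as [y [Hy Heq]].
   rewrite <- Heq. apply (proj1 HLP). exists y; auto. }
 split; auto.
 set (c := INR (cmin G)). assert (Hc2: 2 <= c) by (unfold c; apply (le_INR 2); auto).
 set (q := sqrt c). assert (Hqq: q * q = c) by (apply sqrt_sqrt; lra).
 assert (Hq0: 0 <= q) by apply sqrt_pos.
 assert (Hq1: 1 < q) by nra.
 set (iq := / q). assert (Hiq: q * iq = 1) by (unfold iq; field; lra).
 assert (Hiq0: 0 < iq < 1). { split. unfold iq; apply Rinv_0_lt_compat; lra. nra. }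
 set (F := (1 - iq / 4) * (1 - iq)).
 assert (HF: 0 < F) by (unfold F; apply Rmult_lt_0_compat; lra).
 assert (HvLP0: 0 <= vLP).
 { apply (proj1 HLP). exists (fun _ _ => 0). destruct (LP_zero G); split; auto. }
 assert (HLF: vLP * F <= vPBP).
 { assert (vLP <= vPBP / F).
   { apply (proj2 HLP). intros v [y [Hy ->]].
     assert (Hcap: forall i, (i < nI G)%nat -> q * q <= INR (cap G i)).
     { intros i Hi. rewrite Hqq. unfold c. apply le_INR, cmin_le; auto. }
     pose proof (obj_bound G Hv iq Hiq0 y Hy q Hiq ltac:(lra) Hcap) as Hb.
     pose proof (proj1 HPBP _ (ex_intro _ (XX G iq y) (conj (XX_feasible G iq Hiq0 y Hy) eq_refl))) as Hb2.
     fold F in Hb. apply Rmult_le_reg_r with F; auto.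
     replace (vPBP / F * F) with vPBP by (field; lra). lra. }
   apply Rmult_le_reg_r with (/ F). apply Rinv_0_lt_compat; auto.
   replace (vLP * F * / F) with vLP by (field; lra). auto. }
 assert (Hln: / 2 < ln c).
 { pose proof ln_lt_2. destruct (Rle_lt_or_eq_dec 2 c Hc2) as [Hlt|Heq].
   - pose proof (ln_increasing 2 c ltac:(lra) Hlt). lra.
   - rewrite <- Heq. auto. }
 set (s := sqrt (ln c / c)).
 assert (Hs0: 0 <= s) by apply sqrt_pos.
 assert (Hss: s * s = ln c / c).
 { apply sqrt_sqrt. unfold Rdiv; apply Rmult_le_pos; [lra|apply Rlt_le, Rinv_0_lt_compat; lra]. }
 assert (Hsq: (s * q) * (s * q) = ln c).
 { replace ((s * q) * (s * q)) with ((s * s) * (q * q)) by ring. rewrite Hss, Hqq. field. lra. }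
 assert (Hsq58: 5 / 8 <= s * q).
 { assert (0 <= s * q) by (apply Rmult_le_pos; lra). nra. }
 assert (Hs: 5 / 4 * iq <= 2 * s).
 { assert (s = (s * q) * iq) by (rewrite Rmult_assoc, Hiq; ring).
   rewrite H. assert (0 < iq) by lra. nra. }
 assert (HFb: 1 - 2 * s <= F) by (unfold F; nra).
 assert (vLP * (1 - 2 * s) <= vLP * F) by (apply Rmult_le_compat_l; lra).
 fold c. fold s. lra.
Qed.
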